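(* Let $n\in\mathbb{Z}^+$, $p\geq 1$ and $t\in(1,2]$. Then $$\Gamma_{t^n}(K_n^{p*})\leq \Big(\frac{n}{n+k(n,t)}\Big)^{1/p}\leq \Big(\frac{n}{n+\lfloor a(t)n\rfloor}\Big)^{1/p},$$ $$\Gamma_{t^n}(K_n^{p})\leq \Big(\frac{n}{n+l(n,t)}\Big)^{1/p}\leq \Big(\frac{n}{n+\lfloor b(t)n\rfloor}\Big)^{1/p}.$$
   Context: For a compact convex set $K\subseteq\mathbb{R}^n$ and $m\in\mathbb{Z}^+$, the covering functional is $\Gamma_m(K)=\inf\{\gamma>0:\exists C\subseteq\mathbb{R}^n,\ |C|=m,\ K\subseteq C+\gamma K\}$; for a real number $x\geq1$, $\Gamma_x(K)$ means $\Gamma_{\lfloor x\rfloor}(K)$. $K_n^p=\{(x_1,\dots,x_n)\in\mathbb{R}^n:\sum_{i=1}^n|x_i|^p\leq1\}$ and $K_n^{p*}=\{(x_1,\dots,x_n)\in\mathbb{R}^n:\sum_{i=1}^n x_i^p\leq1,\ x_i\geq0\ \forall i\}$. Let $f(x)=\frac{(1+x)^{1+x}}{x^x}$, $g(x)=\frac{2^x(1+x)^{1+x}}{x^x}$ on $(0,\infty)$ (strictly increasing, tending to $1$ as $x\to0^+$); for $t>1$, $a(t)$ and $b(t)$ are the solutions of $f(x)=t$ and $g(x)=t$. For $t\in(1,2]$, $k(n,t)$ is the nonnegative integer with $\binom{n+k(n,t)}{n}\leq t^n<\binom{n+k(n,t)+1}{n}$ and $l(n,t)$ is the nonnegative integer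 with $2^{l(n,t)}\binom{n+l(n,t)}{n}\leq t^n<2^{l(n,t)+1}\binom{n+l(n,t)+1}{n}$. *)

(* Defs.v *)
From HB Require Import structures.
From mathcomp Require Import all_boot all_order all_algebra.
From mathcomp Require Import all_classical all_reals all_analysis.
Set Implicit Arguments. Unset Strict Implicit. Unset Printing Implicit Defensive.
Import Order.TTheory GRing.Theory Num.Theory.
Local Open Scope classical_set_scope.
Local Open Scope ring_scope.

#[local] Unset Implicit Arguments.
Definition Kp {R : realType} (n : nat) (p : R) : set 'rV[R]_n :=
  [set x | \sum_(i < n) `|x ord0 i| `^ p <= 1].

Definition Kpstar {R : realType} (n : nat) (p : R) : set 'rV[R]_n :=
  [set x | \sum_(i < n) (x ord0 i) `^ p <= 1 /\ forall i, 0 <= x ord0 i].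

Definition covering_functional {R : realType} {n : nat} (m : nat) (K : set 'rV[R]_n) : R :=
  inf [set g : R | 0 < g /\
        exists C : 'I_m -> 'rV[R]_n, injective C /\
          K `<=` [set z | exists i : 'I_m, exists2 y, K y & z = C i + g *: y]].

Definition covering_functional_real {R : realType} {n : nat} (x : R) (K : set 'rV[R]_n) : R :=
  covering_functional (Num.truncn x) K.

Definition ff {R : realType} (x : R) : R := (1 + x) `^ (1 + x) / x `^ x.
Definition gg {R : realType} (x : R) : R := 2 `^ x * (1 + x) `^ (1 + x) / x `^ x.

Definition is_k {R : realType} (n : nat) (t : R) (k : nat) : Prop :=
  ('C(n + k, n))%:R <= t ^+ n /\ t ^+ n < ('C(n + k.+1, n))%:R.

Definition is_l {R : realType} (n : nat) (t : R) (l : nat) : Prop :=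
  (2 ^ l * 'C(n + l, n))%:R <= t ^+ n /\ t ^+ n < (2 ^ l.+1 * 'C(n + l.+1, n))%:R.

(* Main.v *)
Require Import Defs.
From HB Require Import structures.
From mathcomp Require Import all_boot all_order all_algebra.
From mathcomp Require Import all_classical all_reals all_analysis.
Import Order.TTheory GRing.Theory Num.Theory.
Local Open Scope classical_set_scope.
Local Open Scope ring_scope.
Lemma binom_bound (R : realType) (a : R) (n m : nat) : 0 <= a ->
  ('C(n + m, n))%:R * a ^+ m <= (1 + a) ^+ (n + m).
Proof.
move=> a0.
rewrite addrC exprD1n.
have hm : (m < (n + m).+1)%N by rewrite ltnS leq_addl.
rewrite (bigD1 (Ordinal hm)) //= -[X in X <= _]addr0.
have -> : 'C(n + m, n) = 'C(n + m, m) by rewrite -bin_sub ?leq_addr // addKn.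
rewrite mulr_natl -mulr_natr; apply: lerD => //.
by apply: sumr_ge0 => i _; apply: mulrn_wge0; exact: exprn_ge0.
Qed.

Lemma powRV (R : realType) (a r : R) : 0 < a -> (a^-1) `^ r = (a `^ r)^-1.
Proof.
move=> a0.
have h : a `^ r * (a^-1) `^ r = 1.
  by rewrite -powRM ?invr_ge0 ?ltW // mulfV ?gt_eqF // powR1.
have hp : a `^ r != 0 by rewrite gt_eqF // powR_gt0.
by apply: (mulfI hp); rewrite h mulfV.
Qed.

Lemma ff_pow (R : realType) (a : R) (n : nat) : 0 < a ->
  (ff a) ^+ n = (1 + a) ^+ n * ((1 + a) / a) `^ (a * n%:R).
Proof.
move=> a0.
have h1 : 0 < 1 + a by rewrite addr_gt0.
have -> : ff a = (1 + a) * ((1 + a) / a) `^ a.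
  rewrite /ff powRD; last by rewrite (gt_eqF h1) implybT.
  rewrite powRr1 ?ltW // powRM ?ltW ?invr_gt0 // powRV //.
  by rewrite mulrA.
rewrite exprMn powRrM powR_mulrn //.
by rewrite powR_ge0.
Qed.

Lemma C_le_ff (R : realType) (a : R) (n : nat) : 0 < a ->
  ('C(n + Num.truncn (a * n%:R), n))%:R <= (ff a) ^+ n.
Proof.
move=> a0; set m := Num.truncn _.
have h1 : 0 < 1 + a by rewrite addr_gt0.
rewrite ff_pow //.
have ham : 0 < a ^+ m by rewrite exprn_gt0.
rewrite -(ler_pM2r ham).
apply: (le_trans (binom_bound _ _ n m (ltW a0))).
rewrite exprD -mulrA; apply: ler_wpM2l; first exact: exprn_ge0 (ltW h1).
have hq : 1 <= (1 + a) / a by rewrite ler_pdivlMr // mul1r lerDr.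
have H : ((1 + a) / a) ^+ m <= ((1 + a) / a) `^ (a * n%:R).
  rewrite -powR_mulrn; last by rewrite divr_ge0 ?ltW.
  by apply: (ler_powR hq); rewrite /m truncn_le mulr_ge0 // ltW.
apply: le_trans (ler_wpM2r (ltW ham) H).
by rewrite -exprMn divfK ?gt_eqF.
Qed.

Lemma C_le_gg (R : realType) (b : R) (n : nat) : 0 < b ->
  (2 ^ Num.truncn (b * n%:R) * 'C(n + Num.truncn (b * n%:R), n))%:R <= (gg b) ^+ n.
Proof.
move=> b0; set m := Num.truncn _.
have -> : gg b = 2 `^ b * ff b by rewrite /gg /ff mulrA.
rewrite exprMn natrM; apply: ler_pM.
- by rewrite ler0n.
- by rewrite ler0n.
- rewrite -powR_mulrn // -powRrM natrX.
  rewrite -powR_mulrn //.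
  by apply: (ler_powR (ler1n _ 2)); rewrite /m truncn_le mulr_ge0 // ltW.
- exact: C_le_ff.
Qed.

Lemma k_ge (R : realType) (n : nat) (t : R) (k m : nat) :
  is_k n t k -> ('C(n + m, n))%:R <= t ^+ n -> (m <= k)%N.
Proof.
move=> [_ hk] hm; rewrite leqNgt; apply/negP => hkm.
have : ('C(n + k.+1, n) <= 'C(n + m, n))%N by apply: leq_bin2l; rewrite leq_add2l.
rewrite -(ler_nat R) => h.
by have := lt_le_trans hk (le_trans h hm); rewrite ltxx.
Qed.

Lemma l_ge (R : realType) (n : nat) (t : R) (l m : nat) :
  is_l n t l -> (2 ^ m * 'C(n + m, n))%:R <= t ^+ n -> (m <= l)%N.
Proof.
move=> [_ hl] hm; rewrite leqNgt; apply/negP => hkm.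
have : (2 ^ l.+1 * 'C(n + l.+1, n) <= 2 ^ m * 'C(n + m, n))%N.
  by apply: leq_mul; [rewrite leq_pexp2l | apply: leq_bin2l; rewrite leq_add2l].
rewrite -(ler_nat R) => h.
by have := lt_le_trans hl (le_trans h hm); rewrite ltxx.
Qed.

Lemma pow_mono (R : realType) (n k m : nat) (p : R) : (0 < n)%N -> (m <= k)%N -> 0 < p ->
  (n%:R / (n + k)%:R) `^ p^-1 <= (n%:R / (n + m)%:R) `^ p^-1.
Proof.
move=> n0 mk p0.
have hk : 0 < (n + k)%:R :> R by rewrite ltr0n addn_gt0 n0.
have hm : 0 < (n + m)%:R :> R by rewrite ltr0n addn_gt0 n0.
have h3 : n%:R / (n + k)%:R <= n%:R / (n + m)%:R :> R.
  rewrite ler_pM2l ?ltr0n // lef_pV2 ?posrE //.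
  by rewrite ler_nat leq_add2l.
have h1 : (n%:R / (n + k)%:R : R) \in Num.nneg by rewrite nnegrE divr_ge0 // ltW.
have h2 : (n%:R / (n + m)%:R : R) \in Num.nneg by rewrite nnegrE divr_ge0 // ltW.
have hp : 0 <= p^-1 by rewrite invr_ge0 ltW.
exact: (ge0_ler_powR hp h1 h2 h3).
Qed.

From mathcomp Require Import zify.

Lemma powR_le_self (R : realType) (a p : R) : 0 <= a <= 1 -> 1 <= p -> a `^ p <= a.
Proof.
move=> /andP[a0 a1] p1; have [->|an0] := eqVneq a 0.
  by rewrite powR0 // gt_eqF // (lt_le_trans ltr01 p1).
by apply: ge1r_powR => //; rewrite lt_def an0 a0.
Qed.

Lemma superadd (R : realType) (x c p : R) : 0 <= c -> c <= x -> 1 <= p ->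
  (x - c) `^ p + c `^ p <= x `^ p.
Proof.
move=> c0 cx p1.
have [x0|xn0] := eqVneq x 0.
  have c00 : c = 0 by apply/eqP; rewrite eq_le c0 -x0 cx.
  by rewrite x0 c00 subrr powR0 ?addr0 // gt_eqF // (lt_le_trans ltr01 p1).
have xp : 0 < x by rewrite lt_def xn0 (le_trans c0 cx).
have e1 : x - c = ((x - c) / x) * x by rewrite divfK.
have e2 : c = (c / x) * x by rewrite divfK.
have u0 : 0 <= (x - c) / x by rewrite divr_ge0 // ?subr_ge0 // ltW.
have v0 : 0 <= c / x by rewrite divr_ge0 // ltW.
rewrite {1}e1 {2}e2 (powRM _ u0 (ltW xp)) (powRM _ v0 (ltW xp)).
have h1 : ((x - c) / x) `^ p <= (x - c) / x.
  apply: powR_le_self => //; rewrite u0 /=.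
  by rewrite ler_pdivrMr // mul1r lerBlDr lerDl.
have h2 : (c / x) `^ p <= c / x.
  apply: powR_le_self => //; rewrite v0 /=.
  by rewrite ler_pdivrMr // mul1r.
have hx : 0 <= x `^ p by apply: powR_ge0.
apply: le_trans (lerD (ler_wpM2r hx h1) (ler_wpM2r hx h2)) _.
by rewrite -mulrDl -mulrDl subrK divff // mul1r.
Qed.

Lemma S1 (n : nat) (beta : nat -> nat) (k : nat) : exists alpha : nat -> nat,
  (forall i, alpha i <= beta i)%N /\
  (\sum_(i < n) alpha i = minn (\sum_(i < n) beta i) k)%N.
Proof.
elim: n k => [|n IH] k.
  by exists (fun=> 0%N); split => // ; rewrite !big_ord0 min0n.
set a := minn (beta n) k.
have [al [h1 h2]] := IH (k - a)%N.
exists (fun i => if i == n then a else al i); split.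
  by move=> i; case: eqP => [->|_] //; rewrite /a geq_minl.
rewrite !big_ord_recr /= eqxx.
have -> : (\sum_(i < n) (if (i : nat) == n then a else al i) = \sum_(i < n) al i)%N.
  by apply: eq_bigr => i _; rewrite ltn_eqF.
rewrite h2 /a; clear h2 h1 IH a; move: (\sum_(i < n) beta i)%N (beta n) => B b; lia.
Qed.

Definition mk (n : nat) (al : 'I_n -> nat) : seq 'I_n.+1 :=
  flatten [seq nseq (al i) (lift ord_max i) | i <- enum 'I_n].
Arguments mk {n}.

Lemma count_mk n (al : 'I_n -> nat) (j : 'I_n) :
  count_mem (lift ord_max j) (mk al) = al j.
Proof.
rewrite /mk count_flatten sumnE !big_map.
rewrite (bigD1 j) //= count_nseq /= eqxx mul1n big1 ?addn0 // => i ij.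
by rewrite count_nseq /= (inj_eq (@lift_inj _ ord_max)) (negbTE ij) mul0n.
Qed.

Lemma size_mk n (al : 'I_n -> nat) : size (mk al) = (\sum_i al i)%N.
Proof.
by rewrite /mk size_flatten sumnE /shape -map_comp big_map big_enum /=; apply: eq_bigr => i _; rewrite /= size_nseq.
Qed.

Lemma S2 n k (al : 'I_n -> nat) : (\sum_i al i <= k)%N ->
  exists t : k.-tuple 'I_n.+1, sorted leq (map val t) /\
    forall i, count_mem (lift ord_max i) t = al i.
Proof.
move=> hs.
set t0 := mk al ++ nseq (k - \sum_i al i) ord_max.
set r := fun x y : 'I_n.+1 => (val x <= val y)%N.
have rt : total r by move=> x y; rewrite /r leq_total.
have sz : size (sort r t0) == k.
  by rewrite size_sort size_cat size_mk size_nseq subnKC.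
exists (Tuple sz); split.
  by rewrite /= sorted_map; apply: sort_sorted.
move=> i /=; rewrite count_sort count_cat count_mk.
by rewrite count_nseq /= (negbTE (neq_lift ord_max i)) mul0n addn0.
Qed.

Definition cnt (n : nat) (t : seq 'I_n.+1) (i : 'I_n) : nat := count_mem (lift ord_max i) t.
Arguments cnt {n}.
Definition cc (R : realType) (n N : nat) (p : R) (t : seq 'I_n.+1) (i : 'I_n) : R :=
  ((cnt t i)%:R / N%:R) `^ p^-1.
Arguments cc {R n}.

Lemma powRK (R : realType) (x p : R) : 0 <= x -> 0 < p -> (x `^ p) `^ p^-1 = x.
Proof. by move=> x0 p0; rewrite -powRrM mulfV ?gt_eqF // powRr1. Qed.

Lemma powRKV (R : realType) (x p : R) : 0 <= x -> 0 < p -> (x `^ p^-1) `^ p = x.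
Proof. by move=> x0 p0; rewrite -powRrM mulVf ?gt_eqF // powRr1. Qed.

Arguments powRK {R x p}.
Arguments powRKV {R x p}.
Arguments superadd {R x c p}.

Lemma core (R : realType) (n k : nat) (p : R) (w : 'I_n -> R) :
  (0 < n)%N -> 1 <= p -> (forall i, 0 <= w i) -> \sum_i (w i) `^ p <= 1 ->
  exists t : k.-tuple 'I_n.+1, sorted leq (map val t) /\
    (forall i, cc (n + k)%N p t i <= w i) /\
    \sum_i (w i - cc (n + k)%N p t i) `^ p <= n%:R / (n + k)%:R.
Proof.
move=> n0 p1 w0 ws.
have p0 : 0 < p by apply: lt_le_trans ltr01 p1.
have N0 : 0 < (n + k)%:R :> R by rewrite ltr0n addn_gt0 n0.
set N := (n + k)%:R : R.
set z := fun i => N * (w i) `^ p.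
have z0 : forall i, 0 <= z i by move=> i; apply: mulr_ge0; [exact: ltW | exact: powR_ge0].
set beta := fun j : nat => (\sum_(i < n | val i == j) Num.truncn (z i))%N.
have betaE : forall i : 'I_n, beta i = Num.truncn (z i).
  by move=> i; rewrite /beta (big_pred1 i).
have [al [alb als]] := S1 n beta k.
have hsum : (\sum_(i < n) al i <= k)%N by rewrite als geq_minr.
have [t [ts tc]] := S2 n k (fun i : 'I_n => al i) hsum.
  exists t; split => //.
  have cntE : forall i, cnt t i = al i by move=> i; exact: tc.
  have hc : forall i, cc (n + k)%N p t i <= w i.
    move=> i; rewrite /cc cntE -[X in _ <= X](powRK (w0 i) p0).
    have hp : 0 <= p^-1 by rewrite invr_ge0 ltW.
    have h1 : ((al i)%:R / (n + k)%:R : R) \in Num.nneg by rewrite nnegrE divr_ge0 // ltW.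
    have h2 : (w i `^ p) \in Num.nneg by rewrite nnegrE powR_ge0.
    apply: (ge0_ler_powR hp h1 h2).
    rewrite ler_pdivrMr // mulrC -/N -/(z i).
    have := truncn_le (z i); rewrite z0 => hz.
    by apply: le_trans hz; rewrite ler_nat -betaE alb.
  split => //.
  have hsup : forall i, (w i - cc (n + k)%N p t i) `^ p <= (w i) `^ p - (al i)%:R / N.
    move=> i; have c0 : 0 <= cc (n + k)%N p t i by apply: powR_ge0.
    have := superadd c0 (hc i) p1.
    rewrite /cc powRKV ?divr_ge0 ?ler0n ?(ltW N0) // cntE.
    by rewrite lerBrDr.
  apply: le_trans (ler_sum _ (fun i _ => hsup i)) _.
  rewrite sumrB -mulr_suml -natr_sum.
  suff H : N * \sum_i (w i) `^ p - (\sum_(i < n) al i)%:R <= n%:R.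
    rewrite (_ : \sum_i (w i) `^ p - (\sum_(i < n) al i)%:R / N =
         (N * \sum_i (w i) `^ p - (\sum_(i < n) al i)%:R) / N).
      by apply: ler_wpM2r => //; rewrite invr_ge0 ltW.
    by rewrite mulrBl (mulrC N) mulfK // gt_eqF.
  rewrite als; case: (leqP (\sum_(i < n) beta i) k) => hb.
    rewrite mulr_sumr natr_sum -sumrB.
    have -> : n%:R = \sum_(i < n) (1 : R) by rewrite sumr_const card_ord.
    apply: ler_sum => i _; rewrite betaE lerBlDr addrC.
    by rewrite natr1 -/(z i); apply: ltW; apply: truncnS_gt.

  have -> : n%:R = N - k%:R :> R by rewrite /N natrD addrK.
  apply: lerB => //.
  by rewrite -[X in _ <= X]mulr1; apply: ler_wpM2l => //; apply: ltW.
Qed.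

Lemma pad (R : realType) (n m : nat) (i0 : 'I_n) (s : seq 'rV[R]_n) :
  (size (undup s) <= m)%N -> (forall v, v \in s -> `|v ord0 i0| <= 1) ->
  exists C : 'I_m -> 'rV[R]_n, injective C /\ forall v, v \in s -> exists i, C i = v.
Proof.
move=> hsz hs; set u := undup s.
pose far (j : nat) : 'rV[R]_n := \row_i (if i == i0 then (j.+2)%:R else 0).
pose C := fun i : 'I_m => if (i < size u)%N then nth 0 u i else far i.
have hu : forall x, (x < size u)%N -> `|nth 0 u x ord0 i0| <= 1.
  by move=> x hx; apply: hs; rewrite -mem_undup; exact: mem_nth.
have hf : forall x, far x ord0 i0 = (x.+2)%:R by move=> x; rewrite mxE eqxx.
exists C; split.
  move=> i j; rewrite /C.
  case: ifP => hi; case: ifP => hj.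
  - move=> e; apply: val_inj; apply/eqP; rewrite -(nth_uniq 0 hi hj (undup_uniq s)).
    by apply/eqP.
  - move=> e; have := hu _ hi; rewrite e hf ger0_norm ?ler0n //.
    by rewrite lern1.
  - move=> e; have := hu _ hj; rewrite -e hf ger0_norm ?ler0n //.
    by rewrite lern1.
  - move=> e; have := congr1 (fun M : 'rV[R]_n => M ord0 i0) e; rewrite /= !hf.
    move/eqP => h; apply: val_inj; apply/eqP; rewrite -eqSS -eqSS -(eqr_nat R) h //.
move=> v vs; have vu : v \in u by rewrite mem_undup.
have hi : (index v u < m)%N by apply: leq_trans hsz; rewrite index_mem.
by exists (Ordinal hi); rewrite /C /= index_mem vu nth_index.
Qed.

Lemma cov_le (R : realType) (n m : nat) (K : set 'rV[R]_n) (g : R) (C : 'I_m -> 'rV[R]_n) :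
  0 < g -> injective C ->
  K `<=` [set z | exists i : 'I_m, exists2 y, K y & z = C i + g *: y] ->
  covering_functional m K <= g.
Proof.
move=> g0 Ci KC; rewrite /covering_functional.
have hlb : has_lbound [set g : R | 0 < g /\
        exists C : 'I_m -> 'rV[R]_n, injective C /\
          K `<=` [set z | exists i : 'I_m, exists2 y, K y & z = C i + g *: y]].
  by exists 0 => x [x0 _]; apply: ltW.
apply: (ge_inf hlb); split => //; exists C; split.
exact: Ci.
exact: KC.
Qed.

Definition cen (R : realType) (n N : nat) (p : R) (t : seq 'I_n.+1) : 'rV[R]_n :=
  \row_i cc N p t i.
Arguments cen {R n}.

Lemma binC' (n k : nat) : 'C(k + n, k) = 'C(n + k, n).
Proof. by rewrite addnC -bin_sub ?leq_addl // addnK. Qed.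

Lemma cc_le1 (R : realType) (n k : nat) (p : R) (t : k.-tuple 'I_n.+1) i :
  (0 < n)%N -> 0 < p -> 0 <= cc (n + k)%N p t i <= 1.
Proof.
move=> n0 p0; rewrite powR_ge0 /=.
have N0 : 0 < (n + k)%:R :> R by rewrite ltr0n addn_gt0 n0.
have hp : 0 <= p^-1 by rewrite invr_ge0 ltW.
have h1 : ((cnt t i)%:R / (n + k)%:R : R) \in Num.nneg by rewrite nnegrE divr_ge0 // ltW.
have h2 : (1 : R) \in Num.nneg by rewrite nnegrE.
have h3 : ((cnt t i)%:R / (n + k)%:R : R) <= 1.
  rewrite ler_pdivrMr // mul1r ler_nat.
  apply: leq_trans (count_size _ _) _; rewrite size_tuple; exact: leq_addl.
by have := ge0_ler_powR hp h1 h2 h3; rewrite powR1.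
Qed.

Arguments cc_le1 {R n k p}.
Arguments core {R n} k {p}.
Arguments pad {R n m i0 s}.
Arguments cov_le {R n m K g C}.

Lemma cover_star (R : realType) (n k m : nat) (p : R) :
  (0 < n)%N -> 1 <= p -> ('C(n + k, n) <= m)%N ->
  covering_functional m (Kpstar n p) <= (n%:R / (n + k)%:R) `^ p^-1.
Proof.
move=> n0 p1 hm.
have p0 : 0 < p by apply: lt_le_trans ltr01 p1.
have N0 : 0 < (n + k)%:R :> R by rewrite ltr0n addn_gt0 n0.
have q0 : 0 < n%:R / (n + k)%:R :> R by rewrite divr_gt0 // ltr0n.
set g := (n%:R / (n + k)%:R) `^ p^-1.
have g0 : 0 < g by apply: powR_gt0.
set S := [set t : k.-tuple 'I_n.+1 | sorted leq (map val t)]%SET.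
set L := [seq cen (n + k)%N p (val t) | t <- enum S].
have hsz : (size (undup L) <= m)%N.
  apply: leq_trans (size_undup L) _.
  have cS : #|S| = 'C(n + k, n) by rewrite card_sorted_tuples binC'.
  by rewrite cardE in cS; rewrite size_map cS.
have hb : forall v, v \in L -> `|v ord0 (Ordinal n0)| <= 1.
  move=> v /mapP [t _ ->]; rewrite mxE.
  by have /andP[h1 h2] := cc_le1 t (Ordinal n0) n0 p0; rewrite ger0_norm.
have [C [Ci CL]] := pad hsz hb.
apply: (cov_le g0 Ci) => z [zs z0].
have [t [ts [hc hs]]] := core k (fun i => z ord0 i) n0 p1 z0 zs.
have tL : cen (n + k)%N p (val t) \in L.
  by apply: map_f; rewrite mem_enum inE.
have [i Cie] := CL _ tL.
exists i; exists (g^-1 *: (z - cen (n + k)%N p (val t))).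
  have eE : forall j, (g^-1 *: (z - cen (n + k)%N p (val t))) ord0 j =
      g^-1 * (z ord0 j - cc (n + k)%N p t j) by move=> j; rewrite !mxE.
  have d0 : forall j, 0 <= z ord0 j - cc (n + k)%N p t j by move=> j; rewrite subr_ge0 hc.
  split; last by move=> j; rewrite eE mulr_ge0 // invr_ge0 ltW.
  under eq_bigr => j _ do rewrite eE powRM ?invr_ge0 ?(ltW g0) ?d0 //.
  rewrite -mulr_sumr powRV // /g powRKV ?(ltW q0) //.
  rewrite -[X in _ <= X](mulVf (negbT (gt_eqF q0))); apply: ler_wpM2l => //.
by rewrite scalerA mulfV ?gt_eqF // scale1r Cie addrC subrK.
Qed.

Definition cen2 (R : realType) (n N : nat) (p : R) (t : seq 'I_n.+1) (s : seq bool) : 'rV[R]_n :=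
  \row_i ((if nth false s (index (lift ord_max i) t) then -1 else 1) * cc N p t i).
Arguments cen2 {R n}.

Lemma cover_sign (R : realType) (n l m : nat) (p : R) :
  (0 < n)%N -> 1 <= p -> (2 ^ l * 'C(n + l, n) <= m)%N ->
  covering_functional m (Kp n p) <= (n%:R / (n + l)%:R) `^ p^-1.
Proof.
move=> n0 p1 hm.
have p0 : 0 < p by apply: lt_le_trans ltr01 p1.
have N0 : 0 < (n + l)%:R :> R by rewrite ltr0n addn_gt0 n0.
have q0 : 0 < n%:R / (n + l)%:R :> R by rewrite divr_gt0 // ltr0n.
set g := (n%:R / (n + l)%:R) `^ p^-1.
have g0 : 0 < g by apply: powR_gt0.
set S := [set t : l.-tuple 'I_n.+1 | sorted leq (map val t)]%SET.
set L := [seq cen2 (n + l)%N p (val t) (val s) | t <- enum S, s <- enum {: l.-tuple bool}].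
have hsz : (size (undup L) <= m)%N.
  apply: leq_trans (size_undup L) _.
  have cS : #|S| = 'C(n + l, n) by rewrite card_sorted_tuples binC'.
  rewrite cardE in cS; rewrite size_allpairs cS -cardE card_tuple card_bool mulnC.
  exact: hm.
have hb : forall v, v \in L -> `|v ord0 (Ordinal n0)| <= 1.
  move=> v /allpairsP [[t s] [_ _ ->]]; rewrite mxE /=.
  have /andP[h1 h2] := cc_le1 t (Ordinal n0) n0 p0.
  by case: ifP => _; rewrite ?mulN1r ?normrN ?mul1r ger0_norm.
have [C [Ci CL]] := pad hsz hb.
apply: (cov_le g0 Ci) => z zs.
have w0 : forall i, 0 <= `|z ord0 i| by move=> i; apply: normr_ge0.
have [t [ts [hc hs]]] := core l (fun i => `|z ord0 i|) n0 p1 w0 zs.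
pose f := fun j : 'I_n.+1 => if unlift ord_max j is Some i then z ord0 i < 0 else false.
set s := map_tuple f t.
have tL : cen2 (n + l)%N p (val t) (val s) \in L.
  by apply: allpairs_f; rewrite mem_enum // inE.
have [i Cie] := CL _ tL.
have eE : forall j, cen2 (n + l)%N p (val t) (val s) ord0 j =
    if z ord0 j < 0 then - cc (n + l)%N p t j else cc (n + l)%N p t j.
  move=> j; rewrite mxE.
  case: (boolP (lift ord_max j \in val t)) => hin.
    rewrite /s /= (nth_map ord_max); last by rewrite index_mem.
    rewrite nth_index // /f liftK.
    by case: ifP; rewrite ?mulN1r ?mul1r.
  have -> : cc (n + l)%N p t j = 0.
    by rewrite /cc /cnt (count_memPn hin) mul0r powR0 // invr_eq0 gt_eqF.
  by rewrite mulr0; case: ifP; rewrite ?oppr0.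
have dE : forall j, `|z ord0 j - cen2 (n + l)%N p (val t) (val s) ord0 j| =
    `|z ord0 j| - cc (n + l)%N p t j.
  move=> j; rewrite eE; have := hc j => /= hcj.
  have c0 : 0 <= cc (n + l)%N p t j by apply: powR_ge0.
  case: ltrP => hz.
    rewrite opprK; move: hcj; rewrite (ltr0_norm hz) => hcj.
    rewrite ler0_norm; first by rewrite opprD.
    by rewrite addrC -lerBrDr sub0r.
  by move: hcj; rewrite (ger0_norm hz) => hcj; rewrite ger0_norm // subr_ge0.
exists i; exists (g^-1 *: (z - cen2 (n + l)%N p (val t) (val s))).
  rewrite /Kp /=.
  have eE2 : forall j, `|(g^-1 *: (z - cen2 (n + l)%N p (val t) (val s))) ord0 j| =
      g^-1 * (`|z ord0 j| - cc (n + l)%N p t j).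
    by move=> j; rewrite !mxE normrM gtr0_norm ?invr_gt0 // -dE !mxE.
  have d0 : forall j, 0 <= `|z ord0 j| - cc (n + l)%N p t j by move=> j; rewrite subr_ge0 hc.
  under eq_bigr => j _ do rewrite eE2 powRM ?invr_ge0 ?(ltW g0) ?d0 //.
  rewrite -mulr_sumr powRV // /g powRKV ?(ltW q0) //.
  rewrite -[X in _ <= X](mulVf (negbT (gt_eqF q0))); apply: ler_wpM2l => //.
by rewrite scalerA mulfV ?gt_eqF // scale1r Cie addrC subrK.
Qed.

Arguments k_ge {R n t k m}.
Arguments l_ge {R n t l m}.

Theorem proposition3p3 (R : realType) (n : nat) (p t : R)
  (hn : (0 < n)%N) (hp : 1 <= p) (ht1 : 1 < t) (ht2 : t <= 2)
  (k l : nat) (hk : is_k n t k) (hl : is_l n t l)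
  (a b : R) (ha0 : 0 < a) (ha : ff a = t) (hb0 : 0 < b) (hb : gg b = t) :
  (covering_functional_real (t ^+ n) (Kpstar n p)
     <= (n%:R / (n + k)%:R) `^ p^-1
   /\ (n%:R / (n + k)%:R) `^ p^-1
     <= (n%:R / (n + Num.truncn (a * n%:R))%:R) `^ p^-1)
  /\
  (covering_functional_real (t ^+ n) (Kp n p)
     <= (n%:R / (n + l)%:R) `^ p^-1
   /\ (n%:R / (n + l)%:R) `^ p^-1
     <= (n%:R / (n + Num.truncn (b * n%:R))%:R) `^ p^-1).
Proof.
have p0 : 0 < p by apply: lt_le_trans ltr01 hp.
have tn0 : 0 <= t ^+ n by rewrite exprn_ge0 // ltW // (lt_trans ltr01 ht1).
split; split.
- rewrite /covering_functional_real; apply: cover_star => //.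
  by rewrite truncn_ge_nat //; case: hk.
- apply: pow_mono => //; apply: (k_ge hk).
  by rewrite -ha; apply: C_le_ff.
- rewrite /covering_functional_real; apply: cover_sign => //.
  by rewrite truncn_ge_nat //; case: hl.
- apply: pow_mono => //; apply: (l_ge hl).
  by rewrite -hb; apply: C_le_gg.
Qed.
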